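(* (1) Let $K\ge2$ and $N>K$, and let $F\in\mathcal F_K$ have (at least) two identical columns. Then there are $Q^1,Q^2\in\mathcal Q_K^{\mathrm{ua}}$ with $FQ^1=FQ^2$ but $(F,Q^1)\not\sim(F,Q^2)$. (2) Let $K\ge2$ and $N\ge1$, and let $Q\in\mathcal Q_K\setminus\mathcal Q_K^{\mathrm{ua}}$ be such that every column of $Q$ is of the form $e_j$ for some $j$, but for some $k$, $e_k$ is not a column of $Q$. Then for every $F\in\mathcal F_K^{\mathrm d}$ there is $F^2\in\mathcal F_K^{\mathrm d}$ with $FQ=F^2Q$ but $(F,Q)\not\sim(F^2,Q)$.
   Context: Fix positive integers $M$ and $N$. For a positive integer $K$, $\mathcal F_K$ is the set of real $M\times K$ matrices with all entries in $[0,1]$, and $\mathcal Q_K$ is the set of real $K\times N$ matrices with entries in $[0,1]$ each of whose columns sums to $1$. $e_k$ is the $k$-th standard basis vector of $\mathbb R^K$. $\mathcal F_K^{\mathrm d}$ is the set of $F\in\mathcal F_K$ whose columns are mutually different. $\mathcal Q_K^{\mathrm{ua}}$ is the set of $Q\in\mathcal Q_K$ such that every column equals some $e_j$ and every $e_j$, $j\in\{1,\dots,K\}$, occurs as a column. $(F^1,Q^1)\sim(F^2,Q^2)$ means $F^1,F^2$ have the same number $K$ of columns and there is a permutation $\pi$ of $\{1,\dots,K\}$ with $F^2_{sk}=F^1_{s\pi(k)}$ and $Q^2_{ki}=Q^1_{\pi(k)i}$ for all $s,k,i$. *)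

(* Defs.v *)
From HB Require Import structures.
From mathcomp Require Import all_boot all_order all_fingroup all_algebra.
From mathcomp Require Import reals.
Set Implicit Arguments. Unset Strict Implicit. Unset Printing Implicit Defensive.
Import Order.TTheory GRing.Theory Num.Theory.
Local Open Scope ring_scope.

Section Defs.
Variable R : realType.

Definition inF (M K : nat) (F : 'M[R]_(M, K)) : Prop :=
  forall s k, 0 <= F s k <= 1.

Definition inQ (K N : nat) (Q : 'M[R]_(K, N)) : Prop :=
  (forall k i, 0 <= Q k i <= 1) /\ (forall i, \sum_(k < K) Q k i = 1).

Definition e_vec (K : nat) (j : 'I_K) : 'cV[R]_K := \col_(k < K) (k == j)%:R.

Definition inFd (M K : nat) (F : 'M[R]_(M, K)) : Prop :=
  inF F /\ forall k l : 'I_K, col k F = col l F -> k = l.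

Definition cols_basis (K N : nat) (Q : 'M[R]_(K, N)) : Prop :=
  forall i : 'I_N, exists j : 'I_K, col i Q = e_vec j.

Definition inQua (K N : nat) (Q : 'M[R]_(K, N)) : Prop :=
  inQ Q /\ cols_basis Q /\ (forall j : 'I_K, exists i : 'I_N, col i Q = e_vec j).

Definition equivFQ (M K N : nat) (F1 : 'M[R]_(M, K)) (Q1 : 'M[R]_(K, N))
  (F2 : 'M[R]_(M, K)) (Q2 : 'M[R]_(K, N)) : Prop :=
  exists pi : 'S_K,
    (forall s k, F2 s k = F1 s (pi k)) /\ (forall k i, Q2 k i = Q1 (pi k) i).

End Defs.
Arguments e_vec {R K} j.

(* Main.v *)
Require Import Defs.
From HB Require Import structures.
From mathcomp Require Import all_boot all_order all_fingroup all_algebra.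
From mathcomp Require Import reals.
Import Order.TTheory GRing.Theory Num.Theory.
Local Open Scope ring_scope.

Section Aux.
Variable R : realType.

Definition selmx (K N : nat) (g : 'I_N -> 'I_K) : 'M[R]_(K, N) :=
  \matrix_(j, i) (j == g i)%:R.
Arguments selmx {K N} g.

Lemma mul_selmx (M K N : nat) (F : 'M[R]_(M, K)) (g : 'I_N -> 'I_K) s i :
  (F *m selmx g) s i = F s (g i).
Proof.
rewrite mxE (bigD1 (g i)) //= mxE eqxx mulr1 big1 ?addr0 // => j /negbTE Hj.
by rewrite mxE Hj mulr0.
Qed.

Lemma selmx_ua (K N : nat) (g : 'I_N -> 'I_K) :
  (forall j, exists i, g i = j) -> inQua (selmx g).
Proof.
move=> Hs; split; [split|split].
- by move=> k i; rewrite mxE; case: (k == g i) => /=; rewrite ?lexx ?ler01.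
- move=> i; rewrite (bigD1 (g i)) //= mxE eqxx big1 ?addr0 // => j /negbTE Hj.
  by rewrite mxE Hj.
- by move=> i; exists (g i); apply/matrixP => a b; rewrite !mxE.
- move=> j; have [i Hi] := Hs j; exists i; apply/matrixP => a b.
  by rewrite !mxE Hi.
Qed.

Lemma choose_val (M K : nat) (F : 'M[R]_(M, K)) (s0 : 'I_M) (k : 'I_K) :
  exists v : R, 0 <= v <= 1 /\ forall j, F s0 j != v.
Proof.
pose v (t : 'I_K.+1) : R := (t.+1%:R)^-1.
have vb t : 0 <= v t <= 1.
  rewrite /v invr_ge0 ler0n /= invf_le1 ?ltr0Sn //.
  by rewrite (ler_nat R 1).
have vinj : injective v.
  move=> a b /invr_inj /eqP; rewrite eqr_nat eqSS => /eqP H; exact: val_inj.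
case: (boolP [exists t, [forall j, F s0 j != v t]]).
  by move=> /existsP [t /forallP Ht]; exists (v t); split.
rewrite negb_exists => /forallP Hall.
pose f (t : 'I_K.+1) : 'I_K := odflt k [pick j | F s0 j == v t].
have Hf t : F s0 (f t) = v t.
  move: (Hall t); rewrite negb_forall => /existsP [j]; rewrite negbK => Hj.
  rewrite /f; case: pickP => [j' /eqP //|]; by move=> /(_ j); rewrite Hj.
have finj : injective f.
  by move=> a b Hab; apply: vinj; rewrite -Hf Hab Hf.
by have := leq_card f finj; rewrite !card_ord ltnn.
Qed.

End Aux.
Arguments selmx {R K N} g.

Theorem mainTheorem8 (R : realType) (M N : nat) (HM : (0 < M)%N) (HN : (0 < N)%N) :
  (forall (K : nat) (F : 'M[R]_(M, K)),
     (2 <= K)%N -> (K < N)%N -> inF F ->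
     (exists k l : 'I_K, k != l /\ col k F = col l F) ->
     exists Q1 Q2 : 'M[R]_(K, N),
       [/\ inQua Q1, inQua Q2, F *m Q1 = F *m Q2 & ~ equivFQ F Q1 F Q2])
  /\
  (forall (K : nat) (Q : 'M[R]_(K, N)),
     (2 <= K)%N -> (1 <= N)%N -> inQ Q -> ~ inQua Q ->
     cols_basis Q ->
     (exists k : 'I_K, forall i : 'I_N, col i Q != e_vec k) ->
     forall F : 'M[R]_(M, K), inFd F ->
     exists F2 : 'M[R]_(M, K),
       [/\ inFd F2, F *m Q = F2 *m Q & ~ equivFQ F Q F2 Q]).
Proof.
split.
- move=> K F HK HKN HF [k [l [Hkl Hcol]]].
  pose g1 (i : 'I_N) : 'I_K := insubd k (val i).
  pose g2 (i : 'I_N) : 'I_K := if val i == K then l else g1 i.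
  have Hw j : g1 (widen_ord (ltnW HKN) j) = j.
    by apply: val_inj; rewrite /g1 val_insubd /= ltn_ord.
  have Hw2 j : g2 (widen_ord (ltnW HKN) j) = j.
    by rewrite /g2 /= (ltn_eqF (ltn_ord j)) Hw.
  exists (selmx g1), (selmx g2); split.
  + by apply: selmx_ua => j; exists (widen_ord (ltnW HKN) j).
  + by apply: selmx_ua => j; exists (widen_ord (ltnW HKN) j).
  + apply/matrixP => s i; rewrite !mul_selmx /g2.
    case: eqP => // HiK.
    have -> : g1 i = k by apply: val_inj; rewrite /g1 val_insubd HiK ltnn.
    by have := congr1 (fun A : 'cV[R]_ _ => A s ord0) Hcol; rewrite !mxE.
  + move=> [pi [_ Hpi]].
    have Hpl : pi l = l.
      have := Hpi l (widen_ord (ltnW HKN) l); rewrite !mxE Hw2 Hw eqxx.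
      by case: eqP => // _ /eqP; rewrite eqr_nat.
    have := Hpi l (Ordinal HKN); rewrite !mxE Hpl /g2 /= eqxx.
    have -> : g1 (Ordinal HKN) = k by apply: val_inj; rewrite /g1 val_insubd /= ltnn.
    by rewrite eqxx eq_sym (negbTE Hkl) => /eqP; rewrite eqr_nat.
- move=> K Q HK _ HQ _ Hcb [k Hk] F [HF HFd].
  pose s0 : 'I_M := Ordinal HM.
  have [v [Hv Hne]] := @choose_val R _ _ F s0 k.
  pose F2 : 'M[R]_(M, K) := \matrix_(s, j) if j == k then v else F s j.
  have Qk i : Q k i = 0.
    have [j Hj] := Hcb i.
    have := congr1 (fun A : 'cV[R]_ _ => A k ord0) Hj; rewrite !mxE => ->.
    case: eqP => // Hkj; by move: (Hk i); rewrite Hj Hkj eqxx.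
  exists F2; split.
  + split.
      by move=> s j; rewrite mxE; case: eqP => _ //; apply: HF.
    move=> a b Hab.
    have Hs s : (if a == k then v else F s a) = (if b == k then v else F s b).
      by have := congr1 (fun A : 'cV[R]_ _ => A s ord0) Hab; rewrite !mxE.
    move: Hs; case: (eqVneq a k) => [->|Ha]; case: (eqVneq b k) => [->|Hb] //.
    * by move=> /(_ s0) /esym /eqP; rewrite (negbTE (Hne b)).
    * by move=> /(_ s0) /eqP; rewrite (negbTE (Hne a)).
    * move=> Hs; apply: HFd; apply/matrixP => s c; rewrite !mxE.
      by apply: Hs.
  + apply/matrixP => s i; rewrite !mxE; apply: eq_bigr => j _; rewrite mxE.
    by case: eqP => // ->; rewrite Qk !mulr0.
  + move=> [pi [HF2 _]].
    by move: (HF2 s0 k); rewrite mxE eqxx => /esym /eqP; rewrite (negbTE (Hne _)).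
Qed.
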